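(* Let $f:\mathbb{R}^d\to\mathbb{R}$ be $C^2$ with $\nabla^2 f(x)\succ0$ for all $x$, and suppose there is $L_{\text{alt}}>0$ with $$f(x+h)-f(x)\le\langle\nabla f(x),h\rangle+\tfrac12\|h\|_x^2+\tfrac{L_{\text{alt}}}{6}\|h\|_x^3\quad\forall x,h\in\mathbb{R}^d.$$ Let $L_{\text{est}}\ge L_{\text{alt}}$ and let $x_{k+1}$ be the AICN iterate from $x_k$ with $\nabla f(x_k)\neq0$; write $g=\|\nabla f(x_k)\|_{x_k}^*$. Then - if $g\ge\frac{4}{L_{\text{est}}}$: $f(x_{k+1})-f(x_k)\le-\frac{1}{2\sqrt{L_{\text{est}}}}g^{3/2}$; - if $g\le\frac{4}{L_{\text{est}}}$: $f(x_{k+1})-f(x_k)\le-\frac14g^2$; - if $0<c_1\le1$ and $g\ge\frac{4c_1}{L_{\text{est}}}$: $f(x_{k+1})-f(x_k)\le-\frac{\sqrt{c_1}}{2\sqrt{L_{\text{est}}}}g^{3/2}$.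
   Context: Local norms: $\|h\|_x=\langle\nabla^2 f(x)h,h\rangle^{1/2}$, $\|g\|_x^*=\langle g,[\nabla^2 f(x)]^{-1}g\rangle^{1/2}$. AICN step with parameter $L_{\text{est}}>0$: $x_{k+1}=x_k-\alpha_k[\nabla^2 f(x_k)]^{-1}\nabla f(x_k)$ with $\alpha_k=\frac{-1+\sqrt{1+2L_{\text{est}}\|\nabla f(x_k)\|_{x_k}^*}}{L_{\text{est}}\|\nabla f(x_k)\|_{x_k}^*}$. *)

(* Defs.v *)
From HB Require Import structures.
From mathcomp Require Import all_boot all_order all_algebra.
From mathcomp Require Import all_classical all_reals all_analysis.
Set Implicit Arguments. Unset Strict Implicit. Unset Printing Implicit Defensive.
Import Order.TTheory GRing.Theory Num.Theory.
Import numFieldNormedType.Exports.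
Local Open Scope ring_scope.

Definition dotv (R : realType) (d : nat) (u v : 'cV[R]_d) : R := (u^T *m v) 0 0.

Definition C2_with (R : realType) (d : nat) (f : 'cV[R]_d -> R)
  (grad : 'cV[R]_d -> 'cV[R]_d) (hess : 'cV[R]_d -> 'M[R]_d) : Prop :=
  [/\ forall x, differentiable f x,
      forall x h, 'd f x h = dotv (grad x) h,
      forall x, differentiable grad x,
      forall x h, 'd grad x h = hess x *m h
    & continuous hess].

Definition hess_pd (R : realType) (d : nat) (hess : 'cV[R]_d -> 'M[R]_d) : Prop :=
  forall x (h : 'cV[R]_d), h != 0 -> 0 < dotv (hess x *m h) h.

Definition lnorm (R : realType) (d : nat) (hess : 'cV[R]_d -> 'M[R]_d) (x h : 'cV[R]_d) : R :=
  Num.sqrt (dotv (hess x *m h) h).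

Definition dnorm (R : realType) (d : nat) (hess : 'cV[R]_d -> 'M[R]_d) (x g : 'cV[R]_d) : R :=
  Num.sqrt (dotv g (invmx (hess x) *m g)).

Definition aicn_alpha (R : realType) (Lest G : R) : R :=
  (-1 + Num.sqrt (1 + 2 * Lest * G)) / (Lest * G).

Definition aicn_step (R : realType) (d : nat) (grad : 'cV[R]_d -> 'cV[R]_d)
  (hess : 'cV[R]_d -> 'M[R]_d) (Lest : R) (x : 'cV[R]_d) : 'cV[R]_d :=
  x - aicn_alpha Lest (dnorm hess x (grad x)) *: (invmx (hess x) *m grad x).

(* Main.v *)
Require Import Defs.
From HB Require Import structures.
From mathcomp Require Import all_boot all_order all_algebra.
From mathcomp Require Import all_classical all_reals all_analysis.
From mathcomp Require Import ring lra.
Import Order.TTheory GRing.Theory Num.Theory.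
Import numFieldNormedType.Exports.
Local Open Scope ring_scope.

Lemma arith (R: realType) (L La g : R): 0<g -> 0<La -> La <= L ->
 let s := Num.sqrt (1+2*L*g) in let a := (-1+s)/(L*g) in
 [/\ 0 < a, a*(s+1) = 2 & -a*g^+2 + 2^-1*(a*g)^+2 + La/6*(a*g)^+3 <= -(a*g^+2)/2].
Proof.
move=> g0 La0 LaL s a.
have L0 : 0 < L by lra.
have Lg0 : 0 < L*g by apply: mulr_gt0.
have hs2 : s^+2 = 1+2*L*g by rewrite sqr_sqrtr //; nra.
have s0 : 0 <= s by apply: sqrtr_ge0.
have s1 : 1 < s by nra.
have aLg : a*(L*g) = s-1 by rewrite /a divfK ?gt_eqF //; lra.
have a0 : 0 < a by rewrite /a divr_gt0 //; lra.
have as1 : a*(s+1) = 2.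
  apply: (mulIf (x:=L*g)); first by rewrite gt_eqF.
  rewrite mulrAC aLg; nra.
have a1 : a <= 1 by nra.
have q : L*g*a^+2 = 2*(1-a) by nra.
split => //.
have h1 : La/6*(a*g)^+3 <= L/6*(a*g)^+3.
  apply: ler_wpM2r; first by apply: exprn_ge0; nra.
  lra.
have e : L/6*(a*g)^+3 = g^+2*a*(L*g*a^+2)/6 by ring.
rewrite q in e.
have h2 : 0 <= g^+2*a*(1-a) by apply: mulr_ge0; nra.
have e2 : (a*g)^+2 = g^+2*a*a by ring.
rewrite e2; nra.
Qed.
Lemma fin3 (R: realType) (L g a c1: R): 0<g -> 0<L -> 0<a ->
  a*(Num.sqrt (1+2*L*g)+1) = 2 -> 0 < c1 -> c1 <= 1 -> 4 * c1 / L <= g ->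
  -(a*g^+2)/2 <= - (Num.sqrt c1 / (2 * Num.sqrt L)) * (g * Num.sqrt g).
Proof.
move=> g0 L0 a0 as1 c0 c1le hg.
set s := Num.sqrt (1+2*L*g) in as1.
have s0 : 0 <= s by apply: sqrtr_ge0.
have hs2 : s^+2 = 1+2*L*g by rewrite sqr_sqrtr //; nra.
set t := Num.sqrt L. set r := Num.sqrt g. set u := Num.sqrt c1.
have t0 : 0 < t by rewrite sqrtr_gt0.
have r0 : 0 < r by rewrite sqrtr_gt0.
have u0 : 0 < u by rewrite sqrtr_gt0.
have ht : t^+2 = L by rewrite sqr_sqrtr //; lra.
have hr : r^+2 = g by rewrite sqr_sqrtr //; lra.
have hu : u^+2 = c1 by rewrite sqr_sqrtr //; lra.
have u1 : u <= 1 by nra.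
have hLg : 4*c1 <= L*g by rewrite -ler_pdivrMl // mulrC.
set pp := t*r.
have p0 : 0 < pp by apply: mulr_gt0.
have hp2 : pp^+2 = L*g by rewrite exprMn ht hr.
have p2u : 2*u <= pp by nra.
have k : 0 <= pp*(2-u^+2) - 2*u by nra.
have us : u*s <= 2*pp - u.
  have h1 : (u*s)^+2 <= (2*pp-u)^+2.
    rewrite exprMn hs2; have := mulr_ge0 (ltW p0) k; nra.
  have : 0 <= 2*pp-u by nra.
  have : 0 <= u*s by nra.
  nra.
have ap : u <= a*pp by nra.
rewrite -hr.
have -> : - (u / (2 * t)) * (r^+2 * r) = - (u*r^+3) / (2*t) by field; rewrite gt_eqF.
have : u*r^+3/(2*t) <= a*(r^+2)^+2/2.
  rewrite ler_pdivrMr; last by nra.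
  have e : a * (r ^+ 2) ^+ 2 / 2 * (2 * t) = r^+3 * (a*pp) by rewrite /pp; field.
  rewrite e mulrC; apply: ler_wpM2l => //; apply: exprn_ge0; lra.
have -> : - (u*r^+3) / (2*t) = - (u*r^+3/(2*t)) by rewrite mulNr.
lra.
Qed.

Lemma fin2 (R: realType) (L g a: R): 0<g -> 0<L -> 0<a ->
  a*(Num.sqrt (1+2*L*g)+1) = 2 -> g <= 4 / L ->
  -(a*g^+2)/2 <= - (1 / 4) * g ^+ 2.
Proof.
move=> g0 L0 a0 as1 hg.
set s := Num.sqrt (1+2*L*g) in as1.
have s0 : 0 <= s by apply: sqrtr_ge0.
have hs2 : s^+2 = 1+2*L*g by rewrite sqr_sqrtr //; nra.
have hLg : L*g <= 4 by move: hg; rewrite ler_pdivlMr // mulrC.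
have : s <= 3 by nra.
have : 0 <= g^+2 by nra.
nra.
Qed.

Lemma dotvZl (R : realType) (d : nat) (a : R) (u v : 'cV[R]_d) :
  dotv (a *: u) v = a * dotv u v.
Proof. by rewrite /dotv linearZ /= -scalemxAl mxE. Qed.

Lemma dotvZr (R : realType) (d : nat) (a : R) (u v : 'cV[R]_d) :
  dotv u (a *: v) = a * dotv u v.
Proof. by rewrite /dotv -scalemxAr mxE. Qed.

Lemma dotv0l (R : realType) (d : nat) (v : 'cV[R]_d) : dotv 0 v = 0.
Proof. by rewrite /dotv trmx0 mul0mx mxE. Qed.

Theorem lemma11 (R : realType) (d : nat) (f : 'cV[R]_d -> R)
  (grad : 'cV[R]_d -> 'cV[R]_d) (hess : 'cV[R]_d -> 'M[R]_d)
  (Lalt Lest : R) (xk : 'cV[R]_d) :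
  C2_with f grad hess ->
  hess_pd hess ->
  0 < Lalt ->
  (forall x h : 'cV[R]_d,
      f (x + h) - f x <= dotv (grad x) h + 2^-1 * lnorm hess x h ^+ 2
                         + Lalt / 6 * lnorm hess x h ^+ 3) ->
  Lalt <= Lest ->
  grad xk != 0 ->
  let g := dnorm hess xk (grad xk) in
  let xk1 := aicn_step grad hess Lest xk in
  [/\ 4 / Lest <= g ->
        f xk1 - f xk <= - (1 / (2 * Num.sqrt Lest)) * (g * Num.sqrt g),
      g <= 4 / Lest ->
        f xk1 - f xk <= - (1 / 4) * g ^+ 2
    & forall c1 : R, 0 < c1 -> c1 <= 1 -> 4 * c1 / Lest <= g ->
        f xk1 - f xk <= - (Num.sqrt c1 / (2 * Num.sqrt Lest)) * (g * Num.sqrt g)].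
Proof.
move=> _ pd La0 hyp LaL gn0 g xk1.
have L0 : 0 < Lest by lra.
set H := hess xk; set G := grad xk; set y := invmx H *m G.
have Hu : H \in unitmx.
  rewrite unitmxE unitfE -det_tr; apply/negP => /det0P [v vn0 vH0].
  have hv : H *m v^T = 0 by rewrite -[H]trmxK -trmx_mul vH0 trmx0.
  suff : v^T != 0 by move/(pd xk); rewrite -/H hv dotv0l ltxx.
  by apply: contra vn0 => /eqP/(congr1 trmx); rewrite trmxK trmx0 => ->.
have Hy : H *m y = G by rewrite /y mulKVmx.
have yn0 : y != 0 by apply: contra gn0 => /eqP y0; rewrite -/G -Hy y0 mulmx0.
have dGy : 0 < dotv G y by rewrite -{1}Hy; apply: pd.
have g0 : 0 < g by rewrite /g /dnorm sqrtr_gt0.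
have g2 : g^+2 = dotv G y by rewrite /g /dnorm sqr_sqrtr // ltW.
have [a0 as1 D] := @arith R Lest Lalt g g0 La0 LaL.
set a := (-1 + Num.sqrt (1 + 2 * Lest * g)) / (Lest * g) in a0 as1 D.
have hxk1 : xk1 = xk + (-a) *: y by rewrite /xk1 /aicn_step scaleNr.
have hl : lnorm hess xk ((-a) *: y) = a * g.
  rewrite /lnorm -/H -scalemxAr Hy dotvZl dotvZr -g2.
  have -> : - a * (- a * g ^+ 2) = (a*g)^+2 by ring.
  by rewrite sqrtr_sqr ger0_norm // mulr_ge0 // ltW.
have hd : dotv G ((-a) *: y) = - a * g^+2 by rewrite dotvZr g2.
have Fb : f xk1 - f xk <= -(a*g^+2)/2.
  have := hyp xk ((-a) *: y); rewrite -hxk1 hl -/G hd.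
  move=> h; apply: le_trans h _; apply: le_trans D; lra.
split.
- move=> hg; apply: le_trans Fb _.
  have := @fin3 R Lest g a 1 g0 L0 a0 as1 ltr01 (lexx _).
  rewrite mulr1 sqrtr1; by apply.
- by move=> hg; apply: le_trans Fb _; exact: (@fin2 R Lest g a g0 L0 a0 as1 hg).
- by move=> c1 c0 c1le hg; apply: le_trans Fb _; exact: (@fin3 R Lest g a c1 g0 L0 a0 as1 c0 c1le hg).
Qed.
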